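(* Let $n\ge4$ and let $W_n$ be the wheel graph on $n$ vertices with Laplacian matrix \[L=\left[\begin{array}{c|c} n-1 & -\mathbf{1}^T \\ \hline -\mathbf{1} & B \end{array}\right],\] where $B$ is the circulant matrix $\mathrm{circ}(3,-1,0,\ldots,0,-1)$ of order $n-1$. Then the Moore–Penrose inverse of $L$ is \[L^+=\frac{1}{n^2}\left[\begin{array}{c|c} n-1 & -\mathbf{1}^T \\ \hline -\mathbf{1} & -J_{n-1}-nX \end{array}\right],\] where, with $C=\mathrm{circ}(1,0,\ldots,0,-1)$ of order $n-1$, $X=(CC^T+I_{n-1})^{-1}\left[J_{n-1}-nI_{n-1}\right]=\mathrm{circ}(b_0,b_1,\ldots,b_{n-2})$ with, for $j=0,\ldots,n-2$, \[b_j=1+\frac{n2^{n-1-j}}{\sqrt{5}}\left[\frac{(3+\sqrt{5})^j}{2^{n-1}-(3+\sqrt{5})^{n-1}}-\frac{(3-\sqrt{5})^j}{2^{n-1}-(3-\sqrt{5})^{n-1}}\right].\]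
   Context: The wheel graph $W_n$ ($n\ge4$) is a cycle on $n-1$ vertices together with a hub vertex adjacent to every cycle vertex; in the displayed form the hub is listed first and the cycle vertices follow in cyclic order. The Laplacian is $L=D-A$, where $A$ is the adjacency matrix and $D$ the diagonal degree matrix. For $c_0,\dots,c_{k-1}$, $\mathrm{circ}(c_0,\ldots,c_{k-1})$ denotes the $k\times k$ circulant matrix whose $(i,j)$-entry is $c_{(j-i)\bmod k}$. $\mathbf 1$ is the all-ones column vector of length $n-1$, $J_{n-1}$ the $(n-1)\times(n-1)$ all-ones matrix, $I_{n-1}$ the identity. The Moore–Penrose inverse $A^+$ of a real matrix $A$ is the unique matrix with $AA^+A=A$, $A^+AA^+=A^+$, $(AA^+)^T=AA^+$, $(A^+A)^T=A^+A$. *)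

(* Defs.v *)
From HB Require Import structures.
From mathcomp Require Import all_boot all_order all_algebra.
From mathcomp Require Import reals.
Set Implicit Arguments. Unset Strict Implicit. Unset Printing Implicit Defensive.
Import Order.TTheory GRing.Theory Num.Theory.
Local Open Scope ring_scope.

Definition circ (R : nzRingType) (k : nat) (c : nat -> R) : 'M[R]_k :=
  \matrix_(i < k, j < k) c ((j + k - i) %% k)%N.

Definition is_MP_inverse (R : nzRingType) (m n : nat)
    (A : 'M[R]_(m, n)) (Ap : 'M[R]_(n, m)) : Prop :=
  [/\ A *m Ap *m A = A, Ap *m A *m Ap = Ap,
      (A *m Ap)^T = A *m Ap & (Ap *m A)^T = Ap *m A].

(* Wheel graph W_n on vertex set 'I_(1 + (n-1)): vertex 0 is the hub,
   vertices 1, ..., n-1 form the cycle in this cyclic order. *)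
Definition wheel_edge (n : nat) (i j : nat) : bool :=
  if (i == 0)%N then (j != 0)%N
  else if (j == 0)%N then true
  else let d := ((j + n.-1 - i) %% n.-1)%N in (d == 1)%N || (d == (n.-1).-1)%N.

Definition wheel_adj (R : nzRingType) (n : nat) : 'M[R]_(1 + n.-1) :=
  \matrix_(i, j) (if wheel_edge n i j then 1 else 0).

Definition laplacian (R : nzRingType) (k : nat) (A : 'M[R]_k) : 'M[R]_k :=
  diag_mx (\row_i \sum_j A i j) - A.

Definition wheel_B (R : nzRingType) (n : nat) : 'M[R]_(n.-1) :=
  circ (n.-1) (fun k => if (k == 0)%N then 3
                        else if (k == 1)%N || (k == (n.-1).-1)%N then -1 else 0).

Definition wheel_C (R : nzRingType) (n : nat) : 'M[R]_(n.-1) :=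
  circ (n.-1) (fun k => if (k == 0)%N then 1 else if (k == (n.-1).-1)%N then -1 else 0).

Definition wheel_X (R : comUnitRingType) (n : nat) : 'M[R]_(n.-1) :=
  invmx (wheel_C R n *m (wheel_C R n)^T + 1%:M) *m (const_mx 1 - (n%:R) %:M).

Definition wheel_b (R : realType) (n j : nat) : R :=
  1 + n%:R * 2 ^+ (n - 1 - j) / Num.sqrt 5 *
    ((3 + Num.sqrt 5) ^+ j / (2 ^+ (n - 1) - (3 + Num.sqrt 5) ^+ (n - 1))
     - (3 - Num.sqrt 5) ^+ j / (2 ^+ (n - 1) - (3 - Num.sqrt 5) ^+ (n - 1))).

Definition wheel_Lplus (R : realType) (n : nat) : 'M[R]_(1 + n.-1) :=
  (n%:R ^+ 2)^-1 *:
    block_mx ((n.-1)%:R%:M) (- const_mx 1) (- const_mx 1)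
             (- const_mx 1 - n%:R *: wheel_X R n).

(* Main.v *)
Require Import Defs.
From mathcomp Require Import all_boot all_order all_algebra.
From mathcomp Require Import reals ring lra zify.
Import Order.TTheory GRing.Theory Num.Theory.
Local Open Scope ring_scope.

Lemma s5_facts (R : realType) :
  let s := Num.sqrt (5:R) in [/\ s ^+ 2 = 5, 1 < s & s < 3].
Proof.
move=> s; have h2 : s ^+ 2 = 5 by rewrite sqr_sqrtr // ler0n.
have s0 : 0 <= s by rewrite sqrtr_ge0.
split => //; nra.
Qed.

Lemma den_nz (R : realType) (m : nat) : (0 < m)%N ->
  let s := Num.sqrt (5:R) in
  (2 ^+ m - (3 + s) ^+ m != 0) /\ (2 ^+ m - (3 - s) ^+ m != 0).
Proof.
move=> m0 s; have [h2 h1 h3] := s5_facts R; rewrite -/s in h2 h1 h3.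
split; rewrite subr_eq0.
- rewrite lt_eqF // ltrXn2r ?lt0n -?lt0n //; lra.
- rewrite gt_eqF // ltrXn2r ?lt0n -?lt0n //; lra.
Qed.

Lemma wheel_bE (R : realType) (m e : nat) :
  wheel_b R m.+1 e = 1 + m.+1%:R * 2 ^+ (m - e) / Num.sqrt 5 *
    ((3 + Num.sqrt 5) ^+ e / (2 ^+ m - (3 + Num.sqrt 5) ^+ m)
     - (3 - Num.sqrt 5) ^+ e / (2 ^+ m - (3 - Num.sqrt 5) ^+ m)).
Proof. by rewrite /wheel_b subSS subn0. Qed.

Lemma rec_mid (R : realType) (m k : nat) : (k.+2 <= m)%N ->
  3 * wheel_b R m.+1 k.+1 - wheel_b R m.+1 k - wheel_b R m.+1 k.+2 = 1.
Proof.
move=> hk; have m0 : (0 < m)%N by lia.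
rewrite !wheel_bE.
have [h2 h1 h3] := s5_facts R.
have [d1 d2] := @den_nz R m m0.
set s := Num.sqrt 5 in h2 h1 h3 d1 d2 *.
set D1 := 2 ^+ m - _; set D2 := 2 ^+ m - _.
have -> : (m - k = (m - k.+2).+2)%N by lia.
have -> : (m - k.+1 = (m - k.+2).+1)%N by lia.
rewrite !exprS.
have s0 : s != 0 by rewrite gt_eqF //; lra.
field: h2.
all: by rewrite /D1 /D2 d1 d2 s0.
Qed.

Lemma rec_last (R : realType) (k : nat) :
  3 * wheel_b R k.+3 k.+1 - wheel_b R k.+3 k - wheel_b R k.+3 0 = 1.
Proof.
rewrite !wheel_bE.
have [h2 h1 h3] := s5_facts R.
have [d1 d2] := @den_nz R k.+2 isT.
set s := Num.sqrt 5 in h2 h1 h3 d1 d2 *.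
have -> : (k.+2 - k = 2)%N by lia.
have -> : (k.+2 - k.+1 = 1)%N by lia.
rewrite subn0 !exprS expr0 in d1 d2 *.
have s0 : s != 0 by rewrite gt_eqF //; lra.
field: h2.
by rewrite d1 d2 s0.
Qed.

Lemma rec_first (R : realType) (k : nat) :
  3 * wheel_b R k.+3 0 - wheel_b R k.+3 k.+1 - wheel_b R k.+3 1 = 1 - k.+3%:R.
Proof.
rewrite !wheel_bE.
have [h2 h1 h3] := s5_facts R.
have [d1 d2] := @den_nz R k.+2 isT.
set s := Num.sqrt 5 in h2 h1 h3 d1 d2 *.
have -> : (k.+2 - k.+1 = 1)%N by lia.
have -> : (k.+2 - 1 = k.+1)%N by lia.
rewrite subn0 !exprS expr0 in d1 d2 *.
have s0 : s != 0 by rewrite gt_eqF //; lra.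
field: h2.
by rewrite d1 d2 s0.
Qed.

Lemma modn2 (m a : nat) : (a < m + m)%N -> (a %% m = if (a < m) then a else a - m)%N.
Proof.
move=> h; case: ifP => h1; first by rewrite modn_small.
have -> : a = ((a - m) + m)%N by lia.
by rewrite modnDr modn_small; lia.
Qed.

Definition dd (m : nat) (i j : 'I_m) : nat := ((j + m - i) %% m)%N.
Arguments dd {m} i j.

Lemma dd_lt {m} (i j : 'I_m) : (dd i j < m)%N.
Proof. by rewrite /dd ltn_pmod //; apply: leq_ltn_trans (ltn_ord i). Qed.

Lemma ddE {m} (i j : 'I_m) : dd i j = if (i <= j)%N then (j - i)%N else (j + m - i)%N.
Proof.
have := ltn_ord i; have := ltn_ord j => hj hi.
rewrite /dd modn2; last lia.
case: ifP; case: ifP; lia.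
Qed.

Lemma ordSE {m} (i : 'I_m) : (ordS i : nat) = if (i.+1 == m) then 0%N else i.+1.
Proof.
have := ltn_ord i => hi; rewrite /= modn2; last lia.
case: ifP; case: ifP; lia.
Qed.

Lemma ord_predE {m} (i : 'I_m) : (ord_pred i : nat) = if (i == 0%N :> nat) then m.-1 else i.-1.
Proof.
have := ltn_ord i => hi; rewrite /= modn2; last lia.
case: ifP; case: ifP; lia.
Qed.

Lemma ordSE' {m} (i : 'I_m) : (i.+1 %% m = if (i.+1 == m) then 0 else i.+1)%N.
Proof. exact: (ordSE i). Qed.

Lemma ord_predE' {m} (i : 'I_m) : ((i + m).-1 %% m = if (i == 0%N :> nat) then m.-1 else i.-1)%N.
Proof. exact: (ord_predE i). Qed.

Lemma dd0 m (i j : 'I_m) : (dd i j == 0)%N = (i == j).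
Proof.
have := ltn_ord i; have := ltn_ord j => hj hi.
rewrite ddE -val_eqE /=; apply/eqP/eqP; case: ifP; lia.
Qed.

Lemma dd1 k (i j : 'I_k.+3) : (dd i j == 1)%N = (j == ordS i).
Proof.
have := ltn_ord i; have := ltn_ord j => hj hi.
rewrite ddE -val_eqE /= ordSE'; apply/eqP/eqP; case: ifP; case: ifP; lia.
Qed.

Lemma ddl k (i j : 'I_k.+3) : (dd i j == k.+2)%N = (j == ord_pred i).
Proof.
have := ltn_ord i; have := ltn_ord j => hj hi.
rewrite ddE -val_eqE /= ord_predE'; apply/eqP/eqP; case: ifP; case: ifP; lia.
Qed.

Lemma ddS k (i j : 'I_k.+3) :
  dd (ordS i) j = if (dd i j == 0)%N then k.+2 else (dd i j).-1.
Proof.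
have := ltn_ord i; have := ltn_ord j => hj hi.
rewrite !ddE ordSE; case: ifP; case: ifP; case: ifP; case: ifP; lia.
Qed.

Lemma ddP k (i j : 'I_k.+3) :
  dd (ord_pred i) j = if (dd i j == k.+2)%N then 0%N else (dd i j).+1.
Proof.
have := ltn_ord i; have := ltn_ord j => hj hi.
rewrite !ddE ord_predE; case: ifP; case: ifP; case: ifP; case: ifP; lia.
Qed.

Definition pmx (R : nzRingType) m (f : 'I_m -> 'I_m) : 'M[R]_m :=
  \matrix_(i, k) ((k == f i)%:R).
Arguments pmx R {m} f.

Lemma pmx_mul (R : nzRingType) m p (f : 'I_m -> 'I_m) (Y : 'M[R]_(m, p)) :
  pmx R f *m Y = \matrix_(i, j) Y (f i) j.
Proof.
apply/matrixP => i j; rewrite !mxE (bigD1 (f i)) //= mxE eqxx mul1r big1 ?addr0 //.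
by move=> k /negbTE hk; rewrite mxE hk mul0r.
Qed.

Lemma mul_pmx (R : nzRingType) m p (f g : 'I_m -> 'I_m) (Y : 'M[R]_(p, m)) :
  (forall k j, (j == f k) = (k == g j)) ->
  Y *m pmx R f = \matrix_(i, j) Y i (g j).
Proof.
move=> fg; apply/matrixP => i j; rewrite !mxE (bigD1 (g j)) //= mxE fg eqxx mulr1 big1 ?addr0 //.
by move=> k /negbTE hk; rewrite mxE fg hk mulr0.
Qed.

Lemma SP_eq m (k j : 'I_m) : (j == ordS k) = (k == ord_pred j).
Proof. by apply/eqP/eqP => ->; rewrite ?ordSK ?ord_predK. Qed.

Lemma PS_eq m (k j : 'I_m) : (j == ord_pred k) = (k == ordS j).
Proof. by apply/eqP/eqP => ->; rewrite ?ordSK ?ord_predK. Qed.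

Lemma B_eq (R : nzRingType) k :
  wheel_B R k.+4 = 3%:M - pmx R (@ordS _) - pmx R (@ord_pred _).
Proof.
apply/matrixP => i j; rewrite !mxE /=.
rewrite -/(dd i j) -dd1 -ddl -dd0 eq_sym.
have := dd_lt i j; case: (dd i j) => [|[|e]] //= he.
- by rewrite mulr1n subr0 subr0.
- by rewrite subr0 sub0r.
by case: (e.+2 == k.+2); rewrite /= mulr0n subrr ?sub0r ?subr0 ?mulr1n ?oppr0.
Qed.

Lemma C_eq (R : nzRingType) k :
  wheel_C R k.+4 = 1%:M - pmx R (@ord_pred _).
Proof.
apply/matrixP => i j; rewrite !mxE /=.
rewrite -/(dd i j) -ddl -dd0 eq_sym.
have := dd_lt i j; case: (dd i j) => [|e] //= he.
- by rewrite mulr1n subr0.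
case: ifP => _; first by rewrite sub0r.
by rewrite subr0.
Qed.

Lemma trP (R : nzRingType) m : (pmx R (@ord_pred m))^T = pmx R (@ordS _).
Proof. by apply/matrixP => i j; rewrite !mxE PS_eq. Qed.

Lemma PSmul (R : nzRingType) m : pmx R (@ord_pred m.+1) *m pmx R (@ordS _) = 1%:M.
Proof. by apply/matrixP => i j; rewrite pmx_mul !mxE ord_predK eq_sym. Qed.

Lemma CCt (R : comNzRingType) k :
  wheel_C R k.+4 *m (wheel_C R k.+4)^T + 1%:M = wheel_B R k.+4.
Proof.
rewrite B_eq C_eq raddfB /= trP tr_scalar_mx mulmxBl !mulmxBr !mul1mx mulmx1 PSmul.
apply/matrixP => i j; rewrite !mxE; ring.
Qed.

Lemma BY (R : comNzRingType) k p (Y : 'M[R]_(k.+3, p)) i j :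
  (wheel_B R k.+4 *m Y) i j = 3 * Y i j - Y (ordS i) j - Y (ord_pred i) j.
Proof.
by rewrite B_eq !mulmxBl mul_scalar_mx !pmx_mul !mxE.
Qed.

Lemma Bcirc (R : realType) k :
  wheel_B R k.+4 *m circ k.+3 (wheel_b R k.+4) = const_mx 1 - (k.+4%:R)%:M.
Proof.
apply/matrixP => i j; rewrite BY !mxE -/(dd i j) -/(dd (ordS i) j) -/(dd (ord_pred i) j).
rewrite ddS ddP -dd0.
have := dd_lt i j; case: (dd i j) => [|e] he /=.
  by rewrite mulr1n rec_first.
rewrite mulr0n subr0.
case: eqP => [[->]|hne]; first exact: rec_last.
by apply: rec_mid; lia.
Qed.

Lemma JJ (R : nzRingType) p q r :
  (const_mx 1 : 'M[R]_(p, q)) *m (const_mx 1 : 'M[R]_(q, r)) = q%:R *: const_mx 1.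
Proof.
apply/matrixP => i j; rewrite !mxE.
under eq_bigr do rewrite !mxE mulr1.
by rewrite sumr_const card_ord mulr1.
Qed.

Lemma JnJ (R : comNzRingType) k :
  (const_mx 1 - (k.+4%:R)%:M : 'M[R]_k.+3) *m (1%:M + const_mx 1) = - (k.+4%:R)%:M.
Proof.
rewrite mulmxDr mulmx1 !mulmxBl JJ mul_scalar_mx.
apply/matrixP => i j; rewrite !mxE; ring.
Qed.

Lemma B_unit (R : realType) k : wheel_B R k.+4 \in unitmx.
Proof.
have h : wheel_B R k.+4 *m (circ k.+3 (wheel_b R k.+4) *m (- (k.+4%:R)^-1 *: (1%:M + const_mx 1))) = 1%:M.
  rewrite mulmxA Bcirc -scalemxAr JnJ.
  apply/matrixP => i j; rewrite !mxE.
  have hn : (k.+4%:R : R) != 0 by rewrite pnatr_eq0.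
  case: (i == j) => /=; rewrite ?mulr1n ?mulr0n; [field | ring].
  by rewrite -(natrD R 4 k) pnatr_eq0; lia.
by case: (mulmx1_unit h).
Qed.

Lemma X_eq (R : realType) k : wheel_X R k.+4 = circ k.+3 (wheel_b R k.+4).
Proof. by rewrite /wheel_X CCt -Bcirc mulKmx // B_unit. Qed.

Lemma edge_cyc k (i j : 'I_k.+3) :
  wheel_edge k.+4 i.+1 j.+1 = (j == ordS i) || (j == ord_pred i).
Proof. by rewrite /wheel_edge /= addSn subSS -/(dd i j) dd1 ddl. Qed.

Lemma sum_eq1 (R : nzRingType) m (a : 'I_m) : \sum_(j : 'I_m) ((j == a)%:R : R) = 1.
Proof. by rewrite (bigD1 a) //= eqxx big1 ?addr0 // => j /negbTE ->. Qed.

Lemma SP_neq k (i : 'I_k.+3) : (ordS i == ord_pred i) = false.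
Proof.
apply/negbTE/negP => /eqP h.
have h1 : (dd i (ordS i) == 1)%N by rewrite dd1.
have h2 : (dd i (ordS i) == k.+2)%N by rewrite ddl h.
by move: h1 h2 => /eqP ->.
Qed.

Lemma rowsum_hub (R : nzRingType) k (i : 'I_1) :
  \sum_(j : 'I_(1 + k.+3)) wheel_adj R k.+4 (lshift _ i) j = k.+3%:R.
Proof.
have hi : (i : nat) = 0%N by case: i => [[]].
rewrite big_split_ord /= big_ord1 !mxE /= hi.
under eq_bigr do rewrite mxE /=.
under eq_bigr do rewrite hi /=.
by rewrite /= add0r sumr_const card_ord.
Qed.

Lemma rowsum_cyc (R : comNzRingType) k (i : 'I_k.+3) :
  \sum_(j : 'I_(1 + k.+3)) wheel_adj R k.+4 (rshift 1 i) j = 3.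
Proof.
rewrite big_split_ord /= big_ord1 !mxE /=.
under eq_bigr do rewrite mxE /= edge_cyc.
have e : forall j : 'I_k.+3, (if (j == ordS i) || (j == ord_pred i) then 1 else 0 : R)
   = (j == ordS i)%:R + (j == ord_pred i)%:R.
  move=> j; case: (j =P ordS i) => [->|_]; rewrite ?SP_neq ?addr0 //.
  by case: (j == ord_pred i); rewrite ?add0r.
under eq_bigr do rewrite e.
rewrite big_split /= !sum_eq1; ring.
Qed.

Lemma ifSP (R : nzRingType) k (i j : 'I_k.+3) :
  (if (j == ordS i) || (j == ord_pred i) then 1 else 0 : R)
   = (j == ordS i)%:R + (j == ord_pred i)%:R.
Proof.
case: (j =P ordS i) => [->|_]; rewrite ?SP_neq ?addr0 //.
by case: (j == ord_pred i); rewrite ?add0r.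
Qed.

Lemma L_eq (R : comNzRingType) k :
  laplacian (wheel_adj R k.+4) =
  block_mx ((k.+4.-1)%:R%:M) (- const_mx 1) (- const_mx 1) (wheel_B R k.+4).
Proof.
apply/matrixP => i j; rewrite -(splitK i) -(splitK j).
case: (split i) => i'; case: (split j) => j' /=;
  rewrite ?B_eq ?block_mxEul ?block_mxEur ?block_mxEdl ?block_mxEdr /laplacian !mxE.
- rewrite rowsum_hub (ord1 i') (ord1 j') !eqxx /=; ring.
- rewrite rowsum_hub eq_lrshift /= (_ : nat_of_ord i' = 0%N); last by case: i' => [[]].
  by rewrite /= sub0r.
- rewrite rowsum_cyc eq_rlshift /= (_ : nat_of_ord j' = 0%N); last by case: j' => [[]].
  by rewrite /= sub0r.
- rewrite rowsum_cyc eq_rshift /= !add1n edge_cyc ifSP; ring.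
Qed.

Section Facts.
End Facts.

Lemma cB (R : comNzRingType) k p :
  (const_mx 1 : 'M[R]_(p, k.+3)) *m wheel_B R k.+4 = const_mx 1.
Proof.
rewrite B_eq !mulmxBr mul_mx_scalar (mul_pmx _ _ _ _ _ _ (@SP_eq _)) (mul_pmx _ _ _ _ _ _ (@PS_eq _)).
apply/matrixP => i j; rewrite !mxE; ring.
Qed.

Lemma Bc (R : comNzRingType) k p :
  wheel_B R k.+4 *m (const_mx 1 : 'M[R]_(k.+3, p)) = const_mx 1.
Proof.
rewrite B_eq !mulmxBl mul_scalar_mx !pmx_mul.
apply/matrixP => i j; rewrite !mxE; ring.
Qed.

Lemma cW (R : realType) k p :
  (const_mx 1 : 'M[R]_(p, k.+3)) *m invmx (wheel_B R k.+4) = const_mx 1.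
Proof. by rewrite -{1}(cB R k p) mulmxK // B_unit. Qed.

Lemma Wc (R : realType) k p :
  invmx (wheel_B R k.+4) *m (const_mx 1 : 'M[R]_(k.+3, p)) = const_mx 1.
Proof. by rewrite -{1}(Bc R k p) mulKmx // B_unit. Qed.

Lemma X_W (R : realType) k :
  wheel_X R k.+4 = const_mx 1 - k.+4%:R *: invmx (wheel_B R k.+4).
Proof.
by rewrite /wheel_X CCt mulmxBr Wc mul_mx_scalar.
Qed.

Lemma sAl (R : pzSemiRingType) m n p (a : R) (A : 'M[R]_(m, n)) (B : 'M[R]_(n, p)) :
  (a *: A) *m B = a *: (A *m B).
Proof. by rewrite scalemxAl. Qed.

Lemma sAr (R : comPzSemiRingType) m n p (a : R) (A : 'M[R]_(m, n)) (B : 'M[R]_(n, p)) :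
  A *m (a *: B) = a *: (A *m B).
Proof. by rewrite scalemxAr. Qed.

Lemma BW (R : realType) k : wheel_B R k.+4 *m invmx (wheel_B R k.+4) = 1%:M.
Proof. by rewrite mulmxV // B_unit. Qed.

Lemma WB (R : realType) k : invmx (wheel_B R k.+4) *m wheel_B R k.+4 = 1%:M.
Proof. by rewrite mulVmx // B_unit. Qed.

Ltac simp := rewrite ?(mulmxDl, mulmxDr, mulmxBl, mulmxBr, mulNmx, mulmxN, mul_scalar_mx,
   mul_mx_scalar, sAl, sAr, JJ, cB, Bc, cW, Wc, BW, WB, mul1mx, mulmx1, opprK).

Ltac fin := apply/matrixP; let i := fresh "i" in let j := fresh "j" in intros i j; rewrite !mxE; try (rewrite (ord1 i) (ord1 j) eqxx); (try case: (i == j)); rewrite ?mulr0n ?mulr1n; ring.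

Lemma MP (R : realType) k :
  let L := block_mx ((k.+4.-1)%:R%:M) (- const_mx 1) (- const_mx 1) (wheel_B R k.+4) in
  is_MP_inverse L (wheel_Lplus R k.+4).
Proof.
move=> L.
pose Lq := block_mx ((k.+4.-1)%:R%:M) (- const_mx 1) (- const_mx 1)
             (- const_mx 1 - k.+4%:R *: wheel_X R k.+4) : 'M[R]_(1 + k.+3).
pose Q := block_mx ((k.+4.-1)%:R%:M) (- const_mx 1) (- const_mx 1)
             ((k.+4%:R)%:M - const_mx 1) : 'M[R]_(1 + k.+3).
have H1 : L *m Lq = k.+4%:R *: Q.
  rewrite /L /Lq /Q X_W mulmx_block scale_block_mx /=; congr block_mx; simp; fin.
have H2 : Lq *m L = k.+4%:R *: Q.
  rewrite /L /Lq /Q X_W mulmx_block scale_block_mx /=; congr block_mx; simp; fin.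
have H3 : Q *m L = k.+4%:R *: L.
  rewrite /L /Lq /Q mulmx_block scale_block_mx /=; congr block_mx; simp; fin.
have H4 : Q *m Lq = k.+4%:R *: Lq.
  rewrite /L /Lq /Q X_W mulmx_block scale_block_mx /=; congr block_mx; simp; fin.
have H5 : Q^T = Q.
  by rewrite /Q tr_block_mx; congr block_mx; apply/matrixP => i j; rewrite !mxE // eq_sym.
have -> : wheel_Lplus R k.+4 = (k.+4%:R ^+ 2)^-1 *: Lq by [].
have hn : (k.+4%:R : R) != 0 by rewrite pnatr_eq0.
split.
- rewrite sAr H1 !sAl H3 !scalerA -[RHS]scale1r; congr (_ *: _); field.
  by rewrite -(natrD R 4 k) pnatr_eq0; lia.
- rewrite sAl H2 !sAl !sAr H4 !scalerA; congr (_ *: _); field.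
  by rewrite -(natrD R 4 k) pnatr_eq0; lia.
- by rewrite sAr H1 !linearZ /= H5 !scalerA mulrC.
- by rewrite -!scalemxAl H2 !linearZ /= H5 !scalerA mulrC.
Qed.

Theorem mainTheorem10 (R : realType) (n : nat) (hn : (4 <= n)%N) :
  let L := laplacian (wheel_adj R n) in
  [/\ L = block_mx ((n.-1)%:R%:M) (- const_mx 1) (- const_mx 1) (wheel_B R n),
      wheel_C R n *m (wheel_C R n)^T + 1%:M \in unitmx,
      wheel_X R n = circ (n.-1) (wheel_b R n)
    & is_MP_inverse L (wheel_Lplus R n)].
Proof.
case: n hn => [|[|[|[|k]]]] // _.
move=> L; split.
- exact: L_eq.
- by rewrite CCt B_unit.
- exact: X_eq.
- rewrite /L L_eq; exact: MP.
Qed.
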